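(* Let $\mathcal{G}$ be a finite groupoid and let $\mathcal{H}$ and $\mathcal{K}$ be connected wide subgroupoids of $\mathcal{G}$. Then \[|\mathcal{H}\backslash\mathcal{G}/\mathcal{K}|=\langle \chi_{\mathrm{Ind}^\mathcal{G}_\mathcal{H}\mathrm{Tri}},\ \chi_{\mathrm{Ind}^\mathcal{G}_\mathcal{K}\mathrm{Tri}}\rangle.\]
   Context: A groupoid is a category in which every morphism is invertible; all groupoids are finite and nonempty; $\mathcal{C}_0,\mathcal{C}_1$ denote objects and morphisms, $\mathcal{C}_x:=\mathcal{C}(x,x)$ the isotropy group, and $gg'$ the composite $g\circ g'$. A subgroupoid is wide if it contains all objects, connected if any two of its objects are joined by one of its morphisms. For subgroupoids $\mathcal{H},\mathcal{K}$ and $g\in\mathcal{G}_1$, $\mathcal{H}g\mathcal{K}:=\{hgk\mid h\in\mathcal{H}_1,k\in\mathcal{K}_1,\mathrm{dom}\,h=\mathrm{cod}\,g,\mathrm{cod}\,k=\mathrm{dom}\,g\}$, and $\mathcal{H}\backslash\mathcal{G}/\mathcal{K}$ is the set of all such double cosets. A linear representation of a groupoid $\mathcal{C}$ is a functor $\mathcal{C}\to\mathbf{vect}$ (finite-dimensional complex vector spaces). $\mathrm{Tri}:\mathcal{H}\to\mathbf{vect}$ is the trivial representation ($x\mapsto\mathbb{C}$, every morphism $\mapsto\mathrm{id}_\mathbb{C}$). $\mathrm{Ind}^\mathcal{G}_\mathcal{H}:\mathbf{vect}^\mathcal{H}\to\mathbf{vect}^\mathcal{G}$ is the left adjoint of restriction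 along the inclusion $\mathcal{H}\hookrightarrow\mathcal{G}$ (left Kan extension along the inclusion). For a representation $R$ of $\mathcal{G}$ with representation space $V=\bigoplus_{x\in\mathcal{G}_0}R(x)$, and a morphism $g:x\to y$, let $\hat R(g):V\to V$ be the linear map that is $R(g):R(x)\to R(y)$ on the summand $R(x)$ and zero on the other summands; the character is $\chi_R:\mathcal{G}_1\to\mathbb{C}$, $\chi_R(g):=\mathrm{tr}(\hat R(g))$. The inner product of characters is $\langle\chi_R,\chi_{R'}\rangle:=\frac{1}{|\mathcal{G}_0|}\sum_{x\in\mathcal{G}_0}\langle\chi_R|_{\mathcal{G}_x},\chi_{R'}|_{\mathcal{G}_x}\rangle$, where for functions on the group $\mathcal{G}_x$, $\langle\alpha,\beta\rangle=\frac{1}{|\mathcal{G}_x|}\sum_{g\in\mathcal{G}_x}\alpha(g)\overline{\beta(g)}$. *)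

(* Defs.v *)
From HB Require Import structures.
From mathcomp Require Import all_boot all_order all_algebra.
Set Implicit Arguments. Unset Strict Implicit. Unset Printing Implicit Defensive.
Import Order.TTheory GRing.Theory Num.Theory.
Local Open Scope ring_scope.

Record groupoid := Groupoid {
  obj : finType;
  ghom : obj -> obj -> finType;
  gcomp : forall x y z, ghom y z -> ghom x y -> ghom x z;
  gid : forall x, ghom x x;
  ginv : forall x y, ghom x y -> ghom y x;
  gcompA : forall x y z w (h : ghom z w) (g : ghom y z) (f : ghom x y),
      gcomp h (gcomp g f) = gcomp (gcomp h g) f;
  gcomp1g : forall x y (f : ghom x y), gcomp (gid y) f = f;
  gcompg1 : forall x y (f : ghom x y), gcomp f (gid x) = f;
  gcompVg : forall x y (f : ghom x y), gcomp (ginv f) f = gid x;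
  gcompgV : forall x y (f : ghom x y), gcomp f (ginv f) = gid y;
  obj_nonempty : (0 < #|obj|)%N
}.

Arguments ghom : clear implicits.
Arguments gcomp {G x y z} g f : rename.
Arguments gid {G} x : rename.
Arguments ginv {G x y} f : rename.

Section Groupoids.
Variable G : groupoid.

Definition mor := {p : obj G * obj G & ghom G p.1 p.2}.
Definition mkmor x y (g : ghom G x y) : mor := @Tagged _ (x, y) (fun p => ghom G p.1 p.2) g.

Definition is_subgroupoid (O : {set obj G}) (H : forall x y, {set ghom G x y}) :=
  [/\ (forall x y (g : ghom G x y), g \in H x y -> x \in O /\ y \in O),
      (forall x, x \in O -> gid x \in H x x),
      (forall x y z (g : ghom G y z) (f : ghom G x y),
          g \in H y z -> f \in H x y -> gcomp g f \in H x z) &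
      (forall x y (f : ghom G x y), f \in H x y -> ginv f \in H y x)].

Definition wide (O : {set obj G}) := O = [set: obj G].

Definition connected (O : {set obj G}) (H : forall x y, {set ghom G x y}) :=
  forall x y, x \in O -> y \in O -> exists g : ghom G x y, g \in H x y.

Definition dcoset (H K : forall x y, {set ghom G x y}) x y (g : ghom G x y) : {set mor} :=
  [set u : mor | [exists z : obj G, exists w : obj G,
     exists h : ghom G y z, exists k : ghom G w x,
       [&& h \in H y z, k \in K w x & u == mkmor (gcomp h (gcomp g k))]]].

Definition dcoset_of (H K : forall x y, {set ghom G x y}) (u : mor) : {set mor} :=
  dcoset H K (tagged u).

Definition double_cosets (H K : forall x y, {set ghom G x y}) : {set {set mor}} :=
  [set dcoset_of H K u | u : mor].

Variable C : numClosedFieldType.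

(* A linear representation of G: a functor G -> vect, with R(x) = C^(rdim x)
   (row vectors) and R(g) : C^(rdim x) -> C^(rdim y), v |-> v *m rmat g. *)
Record rep := Rep {
  rdim : obj G -> nat;
  rmat : forall x y, ghom G x y -> 'M[C]_(rdim x, rdim y)
}.

Definition is_functor (R : rep) :=
  (forall x, rmat R (gid x) = 1%:M) /\
  (forall x y z (g : ghom G y z) (f : ghom G x y),
      rmat R (gcomp g f) = rmat R f *m rmat R g).

Definition is_natural (R S : rep) (t : forall x, 'M[C]_(rdim R x, rdim S x)) :=
  forall x y (g : ghom G x y), rmat R g *m t y = t x *m rmat S g.

Definition Tri_mat : 'M[C]_1 := 1%:M.

Definition is_natural_TriRes (H : forall x y, {set ghom G x y}) (W : rep)
    (t : forall x, 'M[C]_(1, rdim W x)) :=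
  forall x y (h : ghom G x y), h \in H x y -> Tri_mat *m t y = t x *m rmat W h.

(* (I, eta) is Ind^G_H Tri: a representation I of G with a universal arrow
   eta : Tri ==> Res^G_H I, i.e. the value at Tri of the left adjoint of
   restriction (determined up to isomorphism by this universal property). *)
Definition is_Ind_Tri (H : forall x y, {set ghom G x y}) (I : rep)
    (eta : forall x, 'M[C]_(1, rdim I x)) :=
  [/\ is_functor I, is_natural_TriRes H eta &
      forall W : rep, is_functor W ->
      forall psi : forall x, 'M[C]_(1, rdim W x), is_natural_TriRes H psi ->
      exists! theta : forall x, 'M[C]_(rdim I x, rdim W x),
        is_natural theta /\ (forall x, eta x *m theta x = psi x)].

(* trace of the block map \hat R(g): the trace of R(g) if g is a loop, else 0 *)
Definition rtrace m n (A : 'M[C]_(m, n)) : C :=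
  \sum_(i < m) \sum_(j < n) ((i : nat) == j)%:R * A i j.

Definition character (R : rep) x y (g : ghom G x y) : C :=
  if x == y then rtrace (rmat R g) else 0.

Definition cf_dot (a b : forall x y, ghom G x y -> C) : C :=
  (#|obj G|%:R)^-1 *
  \sum_(x : obj G) ((#|ghom G x x|%:R)^-1 *
                    \sum_(g : ghom G x x) a x x g * (b x x g)^*).

End Groupoids.

(* Main.v *)
Require Import Defs.
From HB Require Import structures.
From mathcomp Require Import all_boot all_order all_algebra all_fingroup.
From Stdlib Require Import FunctionalExtensionality.
Import Order.TTheory GRing.Theory Num.Theory.

Module P1M.
Set Implicit Arguments. Unset Strict Implicit. Unset Printing Implicit Defensive.
Local Open Scope ring_scope.

Section Basic.
Variable G : groupoid.

Lemma ginv_uniq x y (f : ghom G x y) (v : ghom G y x) : gcomp v f = gid x -> v = ginv f.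
Proof.
move=> e; by rewrite -[v]gcompg1 -(gcompgV f) gcompA e gcomp1g.
Qed.

Lemma ginvM x y z (g : ghom G y z) (f : ghom G x y) :
  ginv (gcomp g f) = gcomp (ginv f) (ginv g).
Proof.
symmetry; apply: ginv_uniq.
by rewrite gcompA -(gcompA (ginv f)) gcompVg gcompg1 gcompVg.
Qed.

Lemma ginvK x y (f : ghom G x y) : ginv (ginv f) = f.
Proof. by symmetry; apply: ginv_uniq; rewrite gcompgV. Qed.

Definition gimg x y z (g : ghom G y z) (c : {set ghom G x y}) : {set ghom G x z} :=
  [set gcomp g t | t in c].

Lemma gimg_comp x y z w (g : ghom G z w) (f : ghom G y z) (c : {set ghom G x y}) :
  gimg (gcomp g f) c = gimg g (gimg f c).
Proof.
rewrite /gimg -imset_comp; apply: eq_imset => t /=; by rewrite gcompA.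
Qed.

Lemma gimg_id x y (c : {set ghom G x y}) : gimg (gid y) c = c.
Proof.
rewrite /gimg (eq_imset (g := id)) ?imset_id // => t; by rewrite gcomp1g.
Qed.

Section Sub.
Variables (O : {set obj G}) (H : forall x y, {set ghom G x y}).
Hypotheses (sH : is_subgroupoid O H) (wH : wide O) (cH : connected O H).

Lemma H1 x : gid x \in H x x.
Proof. case: sH => _ h _ _; apply: h; by rewrite wH inE. Qed.
Lemma HM x y z (g : ghom G y z) (f : ghom G x y) :
  g \in H y z -> f \in H x y -> gcomp g f \in H x z.
Proof. case: sH => _ _ h _; exact: h. Qed.
Lemma HV x y (f : ghom G x y) : f \in H x y -> ginv f \in H y x.
Proof. case: sH => _ _ _ h; exact: h. Qed.
Lemma Hconn x y : exists g : ghom G x y, g \in H x y.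
Proof. by apply: cH; rewrite wH inE. Qed.

Variable x0 : obj G.

Definition cl x (t : ghom G x0 x) := gimg t (H x0 x0).
Definition cls x := [set cl t | t : ghom G x0 x].

Lemma cl_mem x (t : ghom G x0 x) : t \in cl t.
Proof. by apply/imsetP; exists (gid x0); rewrite ?H1 ?gcompg1. Qed.

Lemma cl_comp x (t : ghom G x0 x) h : h \in H x0 x0 -> cl (gcomp t h) = cl t.
Proof.
move=> hH; apply/setP => u; apply/imsetP/imsetP => [[k kH ->]|[k kH ->]].
  by exists (gcomp h k); rewrite ?HM // gcompA.
exists (gcomp (ginv h) k); first by rewrite HM ?HV.
by rewrite gcompA -(gcompA t) gcompgV gcompg1.
Qed.

Lemma cl_eq x (t u : ghom G x0 x) : u \in cl t -> cl u = cl t.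
Proof. by case/imsetP => h hH ->; rewrite cl_comp. Qed.

Lemma cls_cl x c (t : ghom G x0 x) : c \in cls x -> t \in c -> c = cl t.
Proof. by case/imsetP => u _ -> /cl_eq. Qed.

Lemma cl_cls x (t : ghom G x0 x) : cl t \in cls x.
Proof. exact: imset_f. Qed.

Lemma gimg_cl x y (g : ghom G x y) (t : ghom G x0 x) : gimg g (cl t) = cl (gcomp g t).
Proof. by rewrite /cl gimg_comp. Qed.

Lemma gimg_cls x y (g : ghom G x y) c : c \in cls x -> gimg g c \in cls y.
Proof. by case/imsetP => t _ ->; rewrite gimg_cl cl_cls. Qed.

Lemma Hx_cl x (h : ghom G x0 x) : h \in H x0 x -> cl h = H x0 x.
Proof.
move=> hH; apply/setP => u; apply/imsetP/idP => [[k kH ->]|uH]; first exact: HM.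
exists (gcomp (ginv h) u); first by rewrite HM ?HV.
by rewrite gcompA gcompgV gcomp1g.
Qed.

Lemma Hcls x : H x0 x \in cls x.
Proof. by case: (Hconn x0 x) => h hH; rewrite -(Hx_cl hH) cl_cls. Qed.

Lemma gimg_H x y (h : ghom G x y) : h \in H x y -> gimg h (H x0 x) = H x0 y.
Proof.
move=> hH; case: (Hconn x0 x) => k kH.
by rewrite -(Hx_cl kH) gimg_cl Hx_cl // HM.
Qed.

End Sub.
End Basic.

End P1M.
Import P1M.

Module P2M.
Set Implicit Arguments. Unset Strict Implicit. Unset Printing Implicit Defensive.
Local Open Scope ring_scope.

Section Model.
Variables (G : groupoid) (C : numClosedFieldType).
Variables (O : {set obj G}) (H : forall x y, {set ghom G x y}).
Hypotheses (sH : is_subgroupoid O H) (wH : wide O) (cH : connected O H).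
Variable x0 : obj G.

Notation cls := (cls H x0).
Notation cl := (cl H).

Let Hc x : H x0 x \in cls x := Hcls sH wH cH x0 x.

Definition cv x (i : 'I_#|cls x|) : {set ghom G x0 x} := enum_val i.
Definition idx x (c : {set ghom G x0 x}) : 'I_#|cls x| := enum_rank_in (Hcls sH wH cH x0 x) c.

Lemma cvP x i : cv i \in cls x. Proof. exact: enum_valP. Qed.
Lemma idxK x c : c \in cls x -> cv (idx c) = c.
Proof. exact: enum_rankK_in. Qed.
Lemma cvK x (i : 'I_#|cls x|) : idx (cv i) = i.
Proof. exact: enum_valK_in. Qed.

Definition Mrep : rep G C :=
  @Rep G C (fun x => #|cls x|)
    (fun x y g => \matrix_(i, j) ((gimg g (cv i) == cv j)%:R)).

Definition Meta x : 'M[C]_(1, rdim Mrep x) := delta_mx (0 : 'I_1) (idx (H x0 x)).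

Lemma row_M x y (g : ghom G x y) i :
  row i (rmat Mrep g) = delta_mx (0 : 'I_1) (idx (gimg g (cv i))).
Proof.
apply/rowP => j; rewrite !mxE /=.
have := gimg_cls g (cvP i) => /idxK e.
suff -> : (gimg g (cv i) == cv j) = (j == idx (gimg g (cv i))) by []. 
apply/eqP/eqP => [E|->]; last by rewrite e.
by rewrite E cvK.
Qed.

Lemma delta_M x y (g : ghom G x y) c : c \in cls x ->
  delta_mx (0 : 'I_1) (idx c) *m rmat Mrep g = delta_mx (0 : 'I_1) (idx (gimg g c)).
Proof. by move=> cc; rewrite -rowE row_M idxK. Qed.

Lemma M_functor : is_functor Mrep.
Proof.
split.
  move=> x; apply/row_matrixP => i; rewrite row_M gimg_id cvK.
  by rewrite rowE mulmx1.
move=> x y z g f; apply/row_matrixP => i.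
by rewrite row_M row_mul row_M delta_M ?gimg_comp // gimg_cls ?cvP.
Qed.

Lemma Meta_nat : is_natural_TriRes H Meta.
Proof.
move=> x y h hH; rewrite /Tri_mat mul1mx /Meta delta_M ?Hc //.
by rewrite (gimg_H sH wH cH).
Qed.

Lemma cv_cl x i : exists t : ghom G x0 x, cv i = cl t.
Proof. by case/imsetP: (cvP i) => t _ ->; exists t. Qed.

Lemma Meta_t x (t : ghom G x0 x) : Meta x0 *m rmat Mrep t = delta_mx (0 : 'I_1) (idx (cl t)).
Proof. by rewrite /Meta delta_M ?Hc. Qed.

Section Univ.
Variable W : rep G C.
Hypothesis fW : is_functor W.
Variable psi : forall x, 'M[C]_(1, rdim W x).
Hypothesis npsi : is_natural_TriRes H psi.

Lemma psiH (h : ghom G x0 x0) : h \in H x0 x0 -> psi x0 *m rmat W h = psi x0.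
Proof. by move=> hH; rewrite -npsi // /Tri_mat mul1mx. Qed.

Lemma psi_cl x (t u : ghom G x0 x) : u \in cl t ->
  psi x0 *m rmat W u = psi x0 *m rmat W t.
Proof.
case/imsetP => h hH ->; case: fW => _ ->; by rewrite mulmxA psiH.
Qed.

Lemma uniq_row (th : forall x, 'M[C]_(rdim Mrep x, rdim W x)) :
  is_natural (R := Mrep) (S := W) th -> (forall x, Meta x *m th x = psi x) ->
  forall x i (t : ghom G x0 x), cv i = cl t -> row i (th x) = psi x0 *m rmat W t.
Proof.
move=> nth eth x i t e.
by rewrite rowE -(cvK i) e -Meta_t -mulmxA nth mulmxA eth.
Qed.

Definition rowv x (c : {set ghom G x0 x}) : 'rV[C]_(rdim W x) :=
  if [pick t in c] is Some t then psi x0 *m rmat W t else 0.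

Lemma rowvE x (t : ghom G x0 x) : rowv (cl t) = psi x0 *m rmat W t.
Proof.
rewrite /rowv; case: pickP => [u uc|/(_ t)]; last by rewrite (cl_mem sH wH).
exact: psi_cl.
Qed.

Definition th0 x : 'M[C]_(rdim Mrep x, rdim W x) := \matrix_(i, k) (rowv (cv i)) 0 k.

Lemma row_th0 x i : row i (th0 x) = rowv (cv i).
Proof. by apply/rowP => k; rewrite !mxE. Qed.

Lemma th0_nat : is_natural (R := Mrep) (S := W) th0.
Proof.
move=> x y g; apply/row_matrixP => i.
rewrite row_mul row_M -rowE row_th0 idxK ?gimg_cls ?cvP //.
rewrite row_mul row_th0; case: (cv_cl i) => t ->.
by rewrite gimg_cl !rowvE; case: fW => _ ->; rewrite mulmxA.
Qed.

Lemma th0_eta x : Meta x *m th0 x = psi x.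
Proof.
rewrite /Meta -rowE row_th0 idxK ?Hc //.
case: (Hconn wH cH x0 x) => h hH.
by rewrite -(Hx_cl sH hH) rowvE -npsi // /Tri_mat mul1mx.
Qed.

End Univ.

Lemma M_Ind : is_Ind_Tri H Meta.
Proof.
split; [exact: M_functor | exact: Meta_nat |].
move=> W fW psi npsi; exists (th0 psi); split; first split.
- exact: th0_nat.
- exact: th0_eta.
move=> th [nth eth]; apply: functional_extensionality_dep => x.
apply/row_matrixP => i; case: (cv_cl i) => t e.
by rewrite (uniq_row nth eth e) row_th0 e rowvE.
Qed.

Lemma M_trace x (a : ghom G x x) :
  rtrace (rmat Mrep a) = #|[set c in cls x | gimg a c == c]|%:R.
Proof.
rewrite /rtrace.
transitivity (\sum_(i < #|cls x|) ((gimg a (cv i) == cv i)%:R : C)).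
  apply: eq_bigr => i _; rewrite (bigD1 i) //= big1 ?addr0.
    by rewrite eqxx mul1r mxE.
  by move=> j ji; rewrite eq_sym (inj_eq val_inj) (negbTE ji) mul0r.
rewrite /cv -(big_enum_val (fun c => ((gimg a c == c)%:R : C))) /=.
rewrite -sum1_card natr_sum big_mkcond /= [RHS]big_mkcond /=.
apply: eq_bigr => c _; rewrite inE; by case: (c \in cls x); case: (_ == _).
Qed.

End Model.

End P2M.
Import P2M.

Module P3M.
Set Implicit Arguments. Unset Strict Implicit. Unset Printing Implicit Defensive.
Local Open Scope ring_scope.

Section Transfer.
Variables (G : groupoid) (C : numClosedFieldType) (H : forall x y, {set ghom G x y}).

Lemma rtrace_tr n (A : 'M[C]_n) : rtrace A = \tr A.
Proof.
rewrite /rtrace /mxtrace; apply: eq_bigr => i _.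
rewrite (bigD1 i) //= big1 ?addr0; first by rewrite eqxx mul1r.
by move=> j ji; rewrite eq_sym (inj_eq val_inj) (negbTE ji) mul0r.
Qed.

Lemma comp_id (I1 I2 : rep G C) e1 e2 :
  is_Ind_Tri H (I:=I1) e1 ->
  forall (th : forall x, 'M[C]_(rdim I1 x, rdim I2 x))
         (th' : forall x, 'M[C]_(rdim I2 x, rdim I1 x)),
  is_natural th -> is_natural th' -> (forall x, e1 x *m th x = e2 x) ->
  (forall x, e2 x *m th' x = e1 x) ->
  forall x, th x *m th' x = 1%:M.
Proof.
case=> f1 n1 u1 th th' nth nth' eth eth' x.
have [c [_ uc]] := u1 I1 f1 e1 n1.
have E1 := uc (fun x => th x *m th' x).
have E2 := uc (fun x => 1%:M).
have E : (fun x => th x *m th' x) = (fun x => 1%:M).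
  rewrite -E1 ?E2 //; split.
  - by move=> y z g; rewrite mulmx1 mul1mx.
  - by move=> y; rewrite mulmx1.
  - move=> y z g; by rewrite mulmxA nth -mulmxA nth' mulmxA.
  - by move=> y; rewrite mulmxA eth eth'.
exact: (congr1 (fun f => f x) E).
Qed.

Lemma trace_transfer (I1 I2 : rep G C) e1 e2 :
  is_Ind_Tri H (I:=I1) e1 -> is_Ind_Tri H (I:=I2) e2 ->
  forall x (f : ghom G x x), rtrace (rmat I1 f) = rtrace (rmat I2 f).
Proof.
move=> h1 h2 x f.
have [f1 n1 u1] := h1; have [f2 n2 u2] := h2.
have [th [[nth eth] _]] := u1 I2 f2 e2 n2.
have [th' [[nth' eth'] _]] := u2 I1 f1 e1 n1.
have E1 := comp_id h1 nth nth' eth eth' x.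
have E2 := comp_id h2 nth' nth eth' eth x.
rewrite !rtrace_tr -[rmat I1 f]mul1mx -E1 -mulmxA -nth' mulmxA mxtrace_mulC.
by rewrite mulmxA E2 mul1mx.
Qed.
End Transfer.

End P3M.
Import P3M.

Module P4M.
Set Implicit Arguments. Unset Strict Implicit. Unset Printing Implicit Defensive.

Section L.
Variables (G : groupoid) (x : obj G).
Definition loop : Type := ghom G x x.
HB.instance Definition _ := Finite.on loop.
Definition lmul (a b : loop) : loop := gcomp b a.
Definition lone : loop := gid x.
Definition linv (a : loop) : loop := ginv a.
Lemma lmulA : associative lmul. Proof. by move=> a b c; rewrite /lmul gcompA. Qed.
Lemma lmul1 : left_id lone lmul. Proof. by move=> a; rewrite /lmul gcompg1. Qed.
Lemma lmulV : left_inverse lone linv lmul. Proof. by move=> a; rewrite /lmul gcompgV. Qed.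
HB.instance Definition _ := Finite_isGroup.Build loop lmulA lmul1 lmulV.
End L.

Section DC.
Variable G : groupoid.
Variables (H K : forall x y, {set ghom G x y}).

Lemma dcosetP x y (g : ghom G x y) (u : mor G) :
  reflect (exists z, exists w, exists h : ghom G y z, exists k : ghom G w x,
             [/\ h \in H y z, k \in K w x & u = mkmor (gcomp h (gcomp g k))])
          (u \in dcoset H K g).
Proof.
rewrite inE; apply: (iffP existsP) => [[z /existsP[w /existsP[h /existsP[k]]]]|].
  by case/and3P => hH kK /eqP e; exists z, w, h, k.
case=> z [w [h [k [hH kK e]]]]; exists z; apply/existsP; exists w.
apply/existsP; exists h; apply/existsP; exists k; by rewrite hH kK e eqxx.
Qed.

Variables (OH OK : {set obj G}).
Hypotheses (sH : is_subgroupoid OH H) (wH : wide OH) (cH : connected OH H).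
Hypotheses (sK : is_subgroupoid OK K) (wK : wide OK) (cK : connected OK K).

Lemma dcoset_self x y (g : ghom G x y) : mkmor g \in dcoset H K g.
Proof.
apply/dcosetP; exists y, x, (gid y), (gid x).
by rewrite (H1 sH wH) (H1 sK wK) gcompg1 gcomp1g.
Qed.

Lemma dcoset_inv a b z w (u : ghom G a b) (h : ghom G b z) (k : ghom G w a) :
  h \in H b z -> k \in K w a -> dcoset H K (gcomp h (gcomp u k)) = dcoset H K u.
Proof.
move=> hH kK; apply/setP => m; apply/dcosetP/dcosetP.
  case=> z' [w' [h' [k' [hH' kK' ->]]]]; exists z', w', (gcomp h' h), (gcomp k k').
  by rewrite !(HM sH) // !(HM sK) // !gcompA.
case=> z' [w' [h' [k' [hH' kK' ->]]]]; exists z', w', (gcomp h' (ginv h)), (gcomp (ginv k) k').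
rewrite (HM sH) ?(HV sH) // (HM sK) ?(HV sK) //; split => //.
by rewrite !gcompA -(gcompA h' (ginv h)) gcompVg gcompg1 -(gcompA _ k) gcompgV gcompg1.
Qed.

End DC.

Section Count.
Variable G : groupoid.
Variables (H K : forall x y, {set ghom G x y}).
Variables (OH OK : {set obj G}).
Hypotheses (sH : is_subgroupoid OH H) (wH : wide OH) (cH : connected OH H).
Hypotheses (sK : is_subgroupoid OK K) (wK : wide OK) (cK : connected OK K).
Variables (x0 x : obj G).

Definition T := ({set ghom G x0 x} * {set ghom G x0 x})%type.
Definition act (p : T) (a : loop x) : T := (gimg (a : ghom G x x) p.1, gimg (a : ghom G x x) p.2).

Lemma act1 : act^~ 1%g =1 id.
Proof. by case=> c d; rewrite /act /= !gimg_id. Qed.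

Lemma actM p : act_morph act p.
Proof. by case: p => c d a b; rewrite /act /= -!gimg_comp. Qed.

Definition toA := TotalAction act1 actM.

Definition Psi (p : T) : {set mor G} :=
  if [pick t in p.1] is Some t then
    if [pick s in p.2] is Some s then dcoset H K (gcomp (ginv t) s) else set0
  else set0.

Lemma PsiE (t s : ghom G x0 x) :
  Psi (cl H t, cl K s) = dcoset H K (gcomp (ginv t) s).
Proof.
rewrite /Psi /=; case: pickP => [t' /imsetP[h hH ->]|/(_ t)]; last by rewrite (cl_mem sH wH).
case: pickP => [s' /imsetP[k kK ->]|/(_ s)]; last by rewrite (cl_mem sK wK).
rewrite ginvM -(dcoset_inv sH sK (gcomp (ginv t) s) (HV sH hH) kK).
by rewrite !gcompA.
Qed.

Definition S := setX (cls H x0 x) (cls K x0 x).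

Lemma memS p : p \in S -> exists t, exists s, p = (cl H t, cl K s).
Proof.
case: p => c d; rewrite inE /= => /andP[/imsetP[t _ ->] /imsetP[s _ ->]].
by exists t, s.
Qed.

Lemma orbitE p q : p \in S -> q \in S ->
  (q \in orbit toA setT p) = (Psi q == Psi p).
Proof.
move=> /memS[t [s ->]] /memS[t' [s' ->]].
apply/imsetP/eqP => [[a _ [-> ->]]|].
  rewrite /= !gimg_cl !PsiE ginvM -gcompA (gcompA (ginv a)) gcompVg gcomp1g //.
rewrite !PsiE => E.
have := dcoset_self sH wH sK wK (gcomp (ginv t') s').
rewrite E => /dcosetP[z [w [h [k [hH kK e]]]]].
have ez : x0 = z by have := congr1 (fun m => (tag m).2) e.
have ew : x0 = w by have := congr1 (fun m => (tag m).1) e.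
case: z / ez h hH e => h hH; case: w / ew k kK => k kK e.
have {}e := eq_from_Tagged e.
exists (gcomp t' (gcomp h (ginv t))); rewrite ?inE //=.
rewrite /act /= !gimg_cl.
have e2 : gcomp (gcomp (gcomp t' h) (ginv t)) s = gcomp s' (ginv k).
  have := congr1 (fun m => gcomp (gcomp t' m) (ginv k)) e.
  rewrite /= gcompA gcompgV gcomp1g => ->.
  by rewrite !gcompA -(gcompA _ k (ginv k)) gcompgV gcompg1.
rewrite !gcompA e2 (cl_comp sK _ (HV sK kK)) -(gcompA _ (ginv t) t) gcompVg gcompg1.
by rewrite (cl_comp sH _ hH).
Qed.

Lemma actsS : [acts setT, on S | toA].
Proof.
apply/subsetP => a _; rewrite !inE; apply/subsetP => p /memS[t [s ->]].
by rewrite inE /= /act /= !gimg_cl inE /= !cl_cls.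
Qed.

Lemma orbitS p : p \in S -> orbit toA setT p \subset S.
Proof.
move=> pS; apply/subsetP => q /imsetP[a _ ->].
by move: pS => /memS[t [s ->]]; rewrite inE /= /act /= !gimg_cl !cl_cls.
Qed.

Lemma card_orbits : #|orbit toA setT @: S| = #|Psi @: S|.
Proof.
have -> : orbit toA setT @: S = (fun y => [set q in S | Psi q == y]) @: (Psi @: S).
  rewrite -imset_comp; apply: eq_in_imset => p pS /=; apply/setP => q.
  rewrite inE; apply/idP/andP => [qO|[qS]]; last by rewrite -orbitE.
  have qS := subsetP (orbitS pS) q qO; by rewrite -orbitE.
apply: card_in_imset => y1 y2 /imsetP[p1 p1S ->] /imsetP[p2 p2S ->] /setP/(_ p1).
rewrite !inE eqxx andbT; move: p1S; rewrite inE => -> /= /esym/eqP. by []. Qed.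

Lemma Psi_dc : Psi @: S = double_cosets H K.
Proof.
apply/setP => D; apply/imsetP/imsetP => [[p /memS[t [s ->]] ->]|[u _ ->]].
  by rewrite PsiE; exists (mkmor (gcomp (ginv t) s)).
case: u => [[a b] g] /=.
case: (Hconn wK cK x0 a) => k kK; case: (Hconn wH cH b x0) => h hH.
case: (Hconn wH cH x0 x) => t _.
exists (cl H t, cl K (gcomp t (gcomp h (gcomp g k)))).
  by rewrite inE /= !cl_cls.
rewrite PsiE gcompA gcompVg gcomp1g (dcoset_inv sH sK g hH kK).
by [].
Qed.


Definition fixc (L : forall x y, {set ghom G x y}) (a : ghom G x x) :=
  #|[set c in cls L x0 x | gimg a c == c]|.

Lemma fix_card (a : loop x) : #|('Fix_(S | toA)[a])%g| = (fixc H a * fixc K a)%N.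
Proof.
rewrite /fixc -cardsX; apply: eq_card => -[c d].
rewrite !inE sub1set !inE /= /act /= xpair_eqE.
by case: (c \in _); case: (d \in _); case: (_ == c); case: (_ == d).
Qed.

Lemma sum_fix : (\sum_(a : ghom G x x) (fixc H a * fixc K a) =
   #|double_cosets H K| * #|ghom G x x|)%N.
Proof.
have := Frobenius_Cauchy actsS; rewrite card_orbits Psi_dc cardsT.
move=> E; rewrite (eq_bigr _ (fun a _ => fix_card a)) in E.
rewrite (reindex (fun a : loop x => a : ghom G x x)) /=; last by exists id.
transitivity (\sum_(a in [set: loop x]) (fixc H a * fixc K a))%N.
  by apply: eq_bigl => a; rewrite inE.
rewrite E; congr (_ * _)%N; apply: (@bij_eq_card _ _ (fun a : loop x => a : ghom G x x)); by exists id.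
Qed.

End Count.

End P4M.
Import P4M.

Local Open Scope ring_scope.

Theorem corollary5p5 (C : numClosedFieldType) (G : groupoid)
    (OH OK : {set obj G}) (H K : forall x y, {set ghom G x y}) :
  is_subgroupoid OH H -> wide OH -> connected OH H ->
  is_subgroupoid OK K -> wide OK -> connected OK K ->
  forall (IH : rep G C) (etaH : forall x, 'M[C]_(1, rdim IH x)),
  is_Ind_Tri H etaH ->
  forall (IK : rep G C) (etaK : forall x, 'M[C]_(1, rdim IK x)),
  is_Ind_Tri K etaK ->
  (#|double_cosets H K|)%:R = cf_dot (character IH) (character IK).
Proof.
move=> sH wH cH sK wK cK IH etaH iH IK etaK iK.
have [x0 _] : exists x0 : obj G, x0 \in predT by apply/card_gt0P; exact: obj_nonempty.
have chH x (a : ghom G x x) : character IH a = (fixc x0 H a)%:R.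
  rewrite /character eqxx (trace_transfer iH (M_Ind C sH wH cH x0)).
  exact: M_trace.
have chK x (a : ghom G x x) : character IK a = (fixc x0 K a)%:R.
  rewrite /character eqxx (trace_transfer iK (M_Ind C sK wK cK x0)).
  exact: M_trace.
rewrite /cf_dot.
transitivity ((#|obj G|%:R)^-1 * \sum_(x : obj G) (#|double_cosets H K|%:R : C)).
  rewrite sumr_const -(mulr_natl (#|double_cosets H K|%:R : C)) mulrA mulVf ?mul1r // pnatr_eq0 -lt0n; exact: obj_nonempty.
congr (_ * _); apply: eq_bigr => x _.
rewrite (eq_bigr (fun a => ((fixc x0 H a * fixc x0 K a)%N)%:R)); last first.
  by move=> a _; rewrite chH chK conjC_nat natrM.
rewrite -natr_sum (sum_fix sH wH cH sK wK cK x0 x) natrM mulrC -mulrA mulfV ?mulr1 // pnatr_eq0 -lt0n; apply/card_gt0P; by exists (gid x).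
Qed.
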